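(* Fix $\epsilon_0>0$, $c>0$, $h\in[k]$, and suppose $n\alpha\ge c\log n$. Then there is an event $\mathcal{E}^{\mathrm{con}}_{\epsilon_0}$ with $\mathbb{P}[\mathcal{E}^{\mathrm{con}}_{\epsilon_0}]\ge 1-kn^{-c/4}$ on which, for every $g\in[k]$ with $g\neq h$, $$\sum_{i\in T_g^*}\mathbf{1}\Big\{\epsilon_0^2\|\theta_g-\theta_h\|^2\le\langle w_i,\theta_h-\theta_g\rangle\Big\}\ \le\ \frac{5n_g^*}{2\epsilon_0^4(\Delta/\sigma)^2}.$$
   Context: Model: $Y_i=\theta_{z_i}+w_i$, $i=1,\dots,n$, with $z\in[k]^n$, centroids $\theta_1,\dots,\theta_k\in\mathbb{R}^d$, and $w_1,\dots,w_n$ independent zero-mean sub-Gaussian vectors with parameter $\sigma>0$, i.e. $\mathbb{E}[e^{\langle a,w_i\rangle}]\le e^{\sigma^2\|a\|^2/2}$ for all $a\in\mathbb{R}^d$. $T_g^*=\{i\in[n]:z_i=g\}$, $n_g^*=|T_g^*|$, $\alpha=\min_g n_g^*/n$, $\Delta=\min_{g\ne h}\|\theta_g-\theta_h\|$ (Euclidean norm). *)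

(* Defs.v *)
From HB Require Import structures.
From mathcomp Require Import all_boot all_order all_algebra.
From mathcomp Require Import all_classical all_reals all_analysis.
Set Implicit Arguments. Unset Strict Implicit. Unset Printing Implicit Defensive.
Import Order.TTheory GRing.Theory Num.Theory.
Local Open Scope classical_set_scope.
Local Open Scope ring_scope.

Definition dotp {R : realType} {d : nat} (u v : 'I_d -> R) : R :=
  \sum_(j < d) u j * v j.
Definition enorm {R : realType} {d : nat} (u : 'I_d -> R) : R :=
  Num.sqrt (dotp u u).
Definition vsub {R : realType} {d : nat} (u v : 'I_d -> R) : 'I_d -> R :=
  fun j => u j - v j.

Definition clsize {n k : nat} (z : 'I_n -> 'I_k) (g : 'I_k) : nat :=
  #|[pred i | z i == g]|.

(* alpha = min_g n_g^*/n  (the default 1 is an upper bound of every n_g/n) *)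
Definition alpha_min {R : realType} {n k : nat} (z : 'I_n -> 'I_k) : R :=
  \big[Num.min/1]_(g < k) ((clsize z g)%:R / n%:R).

(* Delta = min_{g<>h} ||theta_g - theta_h||; the default value is the maximal
   pairwise distance, so this is exactly the minimum whenever k >= 2. *)
Definition maxsep {R : realType} {d k : nat} (theta : 'I_k -> 'I_d -> R) : R :=
  \big[Num.max/0]_(gh : 'I_k * 'I_k) enorm (vsub (theta gh.1) (theta gh.2)).
Definition Delta_sep {R : realType} {d k : nat} (theta : 'I_k -> 'I_d -> R) : R :=
  \big[Num.min/maxsep theta]_(gh : 'I_k * 'I_k | gh.1 != gh.2)
     enorm (vsub (theta gh.1) (theta gh.2)).

Definition gen_sigma {dT : measure_display} {Omega : measurableType dT}
  {R : realType} {d : nat} (X : Omega -> 'I_d -> R) : set (set Omega) :=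
  <<s [set A | exists j : 'I_d, exists B : set R,
        measurable B /\ A = (fun x => X x j) @^-1` B] >>.

Definition mutually_independent {dT : measure_display} {Omega : measurableType dT}
  {R : realType} (P : probability Omega R) {n d : nat}
  (w : 'I_n -> Omega -> 'I_d -> R) : Prop :=
  forall (J : {set 'I_n}) (A : 'I_n -> set Omega),
    (forall i, i \in J -> gen_sigma (w i) (A i)) ->
    P (\bigcap_(i in [set` mem J]) A i) = (\prod_(i in J) P (A i))%E.

Definition zero_mean_subgaussian {dT : measure_display} {Omega : measurableType dT}
  {R : realType} (P : probability Omega R) {d : nat}
  (X : Omega -> 'I_d -> R) (sigma : R) : Prop :=
  (forall j : 'I_d, measurable_fun setT (fun x => X x j)) /\
  (forall j : 'I_d, P.-integrable setT (fun x => (X x j)%:E) /\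
        (\int[P]_x (X x j)%:E = 0)%E) /\
  (forall a : 'I_d -> R,
     (\int[P]_x (expR (dotp a (X x)))%:E
        <= (expR (sigma ^+ 2 * (enorm a) ^+ 2 / 2))%:E)%E).

(* Main.v *)
Require Import Defs.
From HB Require Import structures.
From mathcomp Require Import all_boot all_order all_algebra.
From mathcomp Require Import all_classical all_reals all_analysis.
From mathcomp Require Import ring lra.
Import Order.TTheory GRing.Theory Num.Theory.
Local Open Scope classical_set_scope.
Local Open Scope ring_scope.

Lemma dotp_mfun (R : realType) (dT : measure_display) (T : measurableType dT) (d : nat)
  (X : T -> 'I_d -> R) (a : 'I_d -> R) :
  (forall j, measurable_fun setT (fun x => X x j)) ->
  measurable_fun setT (fun x => dotp (X x) a).
Proof.
move=> mX; rewrite /dotp; apply: measurable_sum => j.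
by apply: measurable_realfun.measurable_funM => //.
Qed.

Lemma gen_sigma_dotp (R : realType) (dT : measure_display) (Omega : measurableType dT)
  (d : nat) (X : Omega -> 'I_d -> R) (a : 'I_d -> R) (s : R) :
  gen_sigma X [set x | s <= dotp (X x) a].
Proof.
pose G := [set A | exists j : 'I_d, exists B : set R,
        measurable B /\ A = (fun x => X x j) @^-1` B].
pose T' := g_sigma_algebraType G.
have mX : forall j, measurable_fun (setT : set T') (fun x => X x j).
  move=> j _ B mB; rewrite setTI; apply: sub_sigma_algebra.
  by exists j, B.
have := @dotp_mfun R _ T' d X a mX measurableT (`[s, +oo[%classic) (measurable_itv _).
by rewrite setTI /gen_sigma -/G; congr (_ _); apply/seteqP; split=> x /=; rewrite in_itv /= andbT.
Qed.

Lemma dotpC (R : realType) (d : nat) (u v : 'I_d -> R) : dotp u v = dotp v u.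
Proof. by rewrite /dotp; apply: eq_bigr => j _; rewrite mulrC. Qed.

Lemma dotp_ge0 (R : realType) (d : nat) (u : 'I_d -> R) : 0 <= dotp u u.
Proof. by rewrite /dotp; apply: sumr_ge0 => j _; rewrite -expr2 sqr_ge0. Qed.

Lemma enorm_sq (R : realType) (d : nat) (u : 'I_d -> R) : enorm u ^+ 2 = dotp u u.
Proof. by rewrite /enorm sqr_sqrtr // dotp_ge0. Qed.

Lemma dotpZl (R : realType) (d : nat) (l : R) (u v : 'I_d -> R) :
  dotp (fun j => l * u j) v = l * dotp u v.
Proof. by rewrite /dotp mulr_sumr; apply: eq_bigr => j _; rewrite mulrA. Qed.

Lemma tail_bound (R : realType) (dT : measure_display) (Omega : measurableType dT)
  (P : probability Omega R) (d : nat) (X : Omega -> 'I_d -> R) (sigma : R)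
  (a : 'I_d -> R) (s lam : R) :
  zero_mean_subgaussian P X sigma -> 0 < lam ->
  (P [set x | (s <= dotp (X x) a)%R] <=
    (expR (sigma ^+ 2 * (lam ^+ 2 * dotp a a) / 2 - lam * s))%:E)%E.
Proof.
move=> [mX [_ sg]] lam0.
have mY : (fun x => dotp (X x) a) \in mfun.
  by rewrite inE; apply: measurable_sum => j; apply: measurable_realfun.measurable_funM.
pose Y : {RV P >-> R} := mfun_Sub mY.
have := chernoff Y s lam0.
rewrite /mmt_gen_fun expectation.unlock /= => H.
apply: (le_trans H).
rewrite expRD EFinM.
apply: lee_wpmul2r; first by rewrite lee_fin expR_ge0.
have := sg (fun j => lam * a j).
rewrite enorm_sq dotpZl dotpC dotpZl [lam * (lam * _)]mulrA -expr2.
apply: le_trans; rewrite le_eqVlt; apply/orP; left; apply/eqP.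
by apply: eq_integral => x _; rewrite /= dotpZl dotpC mulrC.
Qed.

Lemma fin_subadd (R : realType) (dT : measure_display) (Omega : measurableType dT)
  (P : probability Omega R) (I : Type) (r : seq I) (Pr : pred I) (F : I -> set Omega) :
  (forall i, measurable (F i)) ->
  (P (\big[setU/set0]_(i <- r | Pr i) F i) <= \sum_(i <- r | Pr i) P (F i))%E.
Proof.
move=> mF; elim: r => [|a r IH]; first by rewrite !big_nil measure0.
rewrite !big_cons; case: ifP => _ //.
apply: le_trans (measureU2 _ (mF a) (bigsetU_measurable _ (fun i _ => mF i))) _.
by apply: leeD.
Qed.

Lemma in_bigsetU (T : Type) (I : eqType) (r : seq I) (Pr : pred I) (F : I -> set T) (a : I) :
  a \in r -> Pr a -> F a `<=` \big[setU/set0]_(i <- r | Pr i) F i.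
Proof.
elim: r => [//|b r IH]; rewrite inE big_cons => /orP [/eqP <- -> | ar Pra].
  by move=> x Fx; left.
case: ifP => _ x Fx; [right|]; exact: IH.
Qed.

Lemma count_tail (R : realType) (dT : measure_display) (Omega : measurableType dT)
  (P : probability Omega R) (n : nat) (b : 'I_n -> Omega -> bool) (T : {set 'I_n})
  (p : R) (m : nat) :
  (forall i, measurable [set x | b i x]) ->
  (forall J : {set 'I_n}, P (\bigcap_(i in [set` mem J]) [set x | b i x]) =
      (\prod_(i in J) P [set x | b i x])%E) ->
  0 <= p <= 1 -> (forall i, i \in T -> (P [set x | b i x] <= p%:E)%E) ->
  (P [set x | (m <= #|[pred i | (i \in T) && b i x]|)%N] <= (2 ^+ #|T| * p ^+ m)%:E)%E.
Proof.
move=> mb indep /andP [p0 p1] pb.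
pose E (A : {set 'I_n}) := \bigcap_(i in [set` mem A]) [set x | b i x].
have mE : forall A, measurable (E A).
  move=> A; apply: fin_bigcap_measurable; first exact: finite_finset.
  by move=> i _; exact: mb.
have -> : [set x | (m <= #|[pred i | (i \in T) && b i x]|)%N] =
    \big[setU/set0]_(A <- enum {set 'I_n} | (A \subset T) && (m <= #|A|)%N) E A.
  apply/seteqP; split.
    move=> x /= hx.
    apply: (@in_bigsetU _ _ _ _ _ [set i in T | b i x]).
    - by rewrite mem_enum.
    - rewrite /=; apply/andP; split; first by apply/fintype.subsetP => i; rewrite inE => /andP [].
      apply: leq_trans hx _; apply: subset_leq_card; apply/fintype.subsetP => i.
      by rewrite !inE.
    - by move=> i /=; rewrite inE => /andP [].
  move=> x; elim: (enum _) => [|A r IH]; first by rewrite big_nil.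
  rewrite big_cons; case: ifP => [/andP [sAT mA]|_]; last exact: IH.
  case; last exact: IH.
  move=> EAx /=; apply: leq_trans mA _; apply: subset_leq_card; apply/fintype.subsetP => i iA.
  by rewrite inE (fintype.subsetP sAT i iA) /=; apply: EAx.
apply: le_trans (@fin_subadd _ _ _ P _ _ _ _ mE) _.
have fin : forall i, P [set x | b i x] = (fine (P [set x | b i x]))%:E.
  move=> i; rewrite fineK // ge0_fin_numE //.
  by rewrite (le_lt_trans (probability_le1 P (mb i))) // ltey.
have bd : forall A : {set 'I_n}, A \subset T -> (m <= #|A|)%N -> (P (E A) <= (p ^+ m)%:E)%E.
  move=> A sAT mA; rewrite /E indep.
  under eq_bigr do rewrite fin.
  rewrite prodEFin lee_fin.
  apply: le_trans (ler_wiXn2l p0 p1 mA).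
  rewrite -prodr_const; apply: ler_prod => i iA; rewrite fine_ge0 //=.
  have := pb i (fintype.subsetP sAT i iA); rewrite fin lee_fin //.
apply: le_trans (@lee_sum _ _ _ (fun A => (p ^+ m)%:E) _ _ _) _.
  by move=> A /andP [sAT mA]; exact: bd.
rewrite sumEFin lee_fin big_mkcondr /=.
apply: (@le_trans _ _ (\sum_(A <- enum {set 'I_n} | A \subset T) p ^+ m)).
  by apply: ler_sum => A _; case: ifP => // _; rewrite exprn_ge0.
rewrite big_enum_cond /=.
rewrite (eq_bigl (fun A => A \in powerset T)); last first.
  by move=> A; rewrite powersetE.
by rewrite sumr_const card_powerset -[p ^+ m *+ _]mulr_natl natrX.
Qed.

Lemma count_meas (dT : measure_display) (Omega : measurableType dT)
  (n : nat) (b : 'I_n -> Omega -> bool) (T : {set 'I_n}) (m : nat) :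
  (forall i, measurable [set x | b i x]) ->
  measurable [set x | (m <= #|[pred i | (i \in T) && b i x]|)%N].
Proof.
move=> mb.
pose E (A : {set 'I_n}) := \bigcap_(i in [set` mem A]) [set x | b i x].
have mE : forall A, measurable (E A).
  move=> A; apply: fin_bigcap_measurable; first exact: finite_finset.
  by move=> i _; exact: mb.
have -> : [set x | (m <= #|[pred i | (i \in T) && b i x]|)%N] =
    \big[setU/set0]_(A <- enum {set 'I_n} | (A \subset T) && (m <= #|A|)%N) E A.
  apply/seteqP; split.
    move=> x /= hx.
    apply: (@in_bigsetU _ _ _ _ _ [set i in T | b i x]).
    - by rewrite mem_enum.
    - rewrite /=; apply/andP; split; first by apply/fintype.subsetP => i; rewrite inE => /andP [].
      apply: leq_trans hx _; apply: subset_leq_card; apply/fintype.subsetP => i.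
      by rewrite !inE.
    - by move=> i /=; rewrite inE => /andP [].
  move=> x; elim: (enum _) => [|A r IH]; first by rewrite big_nil.
  rewrite big_cons; case: ifP => [/andP [sAT mA]|_]; last exact: IH.
  case; last exact: IH.
  move=> EAx /=; apply: leq_trans mA _; apply: subset_leq_card; apply/fintype.subsetP => i iA.
  by rewrite inE (fintype.subsetP sAT i iA) /=; apply: EAx.
by apply: bigsetU_measurable => A _; exact: mE.
Qed.

Lemma dotp_vsubC (R : realType) (d : nat) (u v : 'I_d -> R) :
  dotp (vsub u v) (vsub u v) = dotp (vsub v u) (vsub v u).
Proof. by rewrite /dotp; apply: eq_bigr => j _; rewrite /vsub -mulrNN !opprB. Qed.

Theorem mainTheorem4 (R : realType) (dT : measure_display) (Omega : measurableType dT)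
  (P : probability Omega R) (n d k : nat)
  (z : 'I_n -> 'I_k) (theta : 'I_k -> 'I_d -> R)
  (w : 'I_n -> Omega -> 'I_d -> R) (sigma eps0 c : R) (h : 'I_k) :
  0 < sigma ->
  (forall i, zero_mean_subgaussian P (w i) sigma) ->
  mutually_independent P w ->
  0 < Delta_sep theta ->
  0 < eps0 -> 0 < c ->
  n%:R * alpha_min z >= c * ln n%:R ->
  exists E : set Omega,
    measurable E /\
    (P E >= (1 - k%:R * (n%:R `^ (- (c / 4))))%:E)%E /\
    (forall x, E x ->
       forall g : 'I_k, g != h ->
         (#|[pred i | (z i == g) &&
             (eps0 ^+ 2 * (enorm (vsub (theta g) (theta h))) ^+ 2
                <= dotp (w i x) (vsub (theta h) (theta g)))]|)%:R
         <= 5 * (clsize z g)%:R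
              / (2 * eps0 ^+ 4 * (Delta_sep theta / sigma) ^+ 2)).
Proof.
move=> sig0 sg indep Dpos e0 c0 hn.
set Dl := Delta_sep theta.
pose a g := vsub (theta h) (theta g).
pose s g := eps0 ^+ 2 * (enorm (vsub (theta g) (theta h))) ^+ 2.
pose b g i x := s g <= dotp (w i x) (a g).
pose T g : {set 'I_n} := finset (fun i => z i == g).
pose N g := clsize z g.
pose t g := 5 * (N g)%:R / (2 * eps0 ^+ 4 * (Dl / sigma) ^+ 2).
pose m g := (Num.Def.trunc (t g)).+1.
pose Bad g := [set x | (m g <= #|[pred i | (i \in T g) && b g i x]|)%N].
have mB : forall g i, measurable [set x | b g i x].
  move=> g i; have [mX _] := sg i.
  have := @dotp_mfun R _ Omega d (w i) (a g) mX measurableT (`[s g, +oo[%classic) (measurable_itv _).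
  by rewrite setTI; congr (measurable _); apply/seteqP; split=> x /=; rewrite in_itv /= andbT.
have mBad : forall g, measurable (Bad g) by move=> g; exact: (@count_meas _ _ n (b g) (T g) (m g) (mB g)).
pose U := \big[setU/set0]_(g <- enum 'I_k | g != h) Bad g.
have mU : measurable U by apply: bigsetU_measurable => g _; exact: mBad.
have t0 : forall g, 0 <= t g.
  move=> g; apply: divr_ge0; first by rewrite mulr_ge0.
  by rewrite mulr_ge0 // ?sqr_ge0 // mulr_ge0 // exprn_ge0 // ltW.
pose q := n%:R `^ (- (c / 4)).
have subN : forall g x, (#|[pred i | (i \in T g) && b g i x]| <= N g)%N.
  move=> g x; rewrite /N /clsize; apply: subset_leq_card; apply/fintype.subsetP => i.
  by rewrite !inE => /andP [].
have badP : forall g, g != h -> (P (Bad g) <= q%:E)%E.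
  move=> g gh.
  case: (posnP (N g)) => [N0 | Npos].
    have -> : Bad g = set0.
      apply/seteqP; split => x //= hx.
      by have := leq_trans hx (subN g x); rewrite N0.
    by rewrite measure0 lee_fin powR_ge0.
  set e := enorm (vsub (theta g) (theta h)).
  have Dle : Dl <= e.
    by rewrite /Dl /Delta_sep; apply: (@bigmin_le_cond _ _ _ _ (g, h) (fun gh => gh.1 != gh.2)).
  have e2 : dotp (a g) (a g) = e ^+ 2 by rewrite /e enorm_sq dotp_vsubC.
  pose y := eps0 ^+ 4 * e ^+ 2 / (2 * sigma ^+ 2).
  pose p := expR (- y).
  have y0 : 0 <= y.
    by apply: divr_ge0; [rewrite mulr_ge0 // ?sqr_ge0 // exprn_ge0 // ltW | rewrite mulr_ge0 // exprn_ge0 // ltW].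
  have lam0 : 0 < eps0 ^+ 2 / sigma ^+ 2 by rewrite divr_gt0 // exprn_gt0.
  have pb : forall i, i \in T g -> (P [set x | b g i x] <= p%:E)%E.
    move=> i _.
    apply: le_trans (@tail_bound _ _ _ P d (w i) sigma (a g) (s g) (eps0 ^+ 2 / sigma ^+ 2) (sg i) lam0) _.
    rewrite lee_fin ler_expR e2 /s /y -/e le_eqVlt; apply/orP; left; apply/eqP.
    have sn : sigma != 0 by rewrite gt_eqF.
    by field.
  have ind : forall J : {set 'I_n}, P (\bigcap_(i in [set` mem J]) [set x | b g i x]) =
      (\prod_(i in J) P [set x | b g i x])%E.
    by move=> J; apply: indep => i _; exact: gen_sigma_dotp.
  have p01 : 0 <= p <= 1 by rewrite expR_ge0 expR_le1 oppr_le0.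
  apply: le_trans (@count_tail _ _ _ P n (b g) (T g) p (m g) (mB g) ind p01 pb) _.
  rewrite lee_fin.
  have cT : #|T g| = N g by rewrite /T /N /clsize cardsE.
  rewrite cT.
  pose Nr : R := (N g)%:R.
  have nN : (N g <= n)%N.
    by rewrite /N /clsize; apply: leq_trans (max_card _) _; rewrite card_ord.
  have n0 : (0 < n)%N by apply: leq_trans Npos nN.
  have nr0 : n%:R != 0 :> R by rewrite pnatr_eq0 -lt0n.
  have cln : c * ln n%:R <= Nr.
    apply: le_trans hn _.
    have al : alpha_min z <= Nr / n%:R.
      by rewrite /alpha_min; exact: (@bigmin_le _ _ _ _ g (fun g => (clsize z g)%:R / n%:R)).
    apply: le_trans (ler_wpM2l (ler0n _ n) al) _.
    by rewrite mulrC divfK.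
  have tm : t g <= (m g)%:R by have /andP [_ /ltW] := truncn_itv (t0 g).
  have Dl0 : 0 < Dl by [].
  have yt : 5 * Nr / 4 <= y * (m g)%:R.
    pose y' := eps0 ^+ 4 * Dl ^+ 2 / (2 * sigma ^+ 2).
    have ty : y' * t g = 5 * Nr / 4.
      have sn : sigma != 0 by rewrite gt_eqF.
      have en : eps0 != 0 by rewrite gt_eqF.
      have dn : Dl != 0 by rewrite gt_eqF.
      by rewrite /y' /t /Nr; field; rewrite sn dn en.
    have y'y : y' <= y.
      rewrite /y' /y ler_pM2r ?invr_gt0 ?mulr_gt0 ?exprn_gt0 // ler_pM2l ?exprn_gt0 //.
      apply: lerXn2r; [by rewrite nnegrE ltW | by rewrite nnegrE /e /enorm sqrtr_ge0 | exact: Dle].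
    rewrite -ty; apply: ler_pM => //.
    by rewrite /y' divr_ge0 // ?mulr_ge0 // ?sqr_ge0 // ?exprn_ge0 // ltW.
  have two : 2 ^+ N g <= expR Nr :> R.
    rewrite -[Nr]mulr1 expRM_natl; apply: lerXn2r; rewrite ?nnegrE ?expR_ge0 //.
    by have := expR_ge1Dx (1 : R); rewrite (_ : 1 + 1 = 2 :> R) //; lra.
  apply: (@le_trans _ _ (expR Nr * expR (- y * (m g)%:R))).
    rewrite expRM_natr; apply: ler_pM => //; rewrite ?exprn_ge0 ?expR_ge0 //.
  rewrite -expRD /q /powR ifF; last exact/negbTE.
  rewrite ler_expR.
  lra.
exists (~` U); split; first exact: measurableC.
split.
  have PU : (P U <= (k%:R * q)%:E)%E.
    apply: le_trans (@fin_subadd _ _ _ P _ _ _ _ mBad) _.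
    apply: le_trans (@lee_sum _ _ _ (fun _ => q%:E) _ _ _) _.
      by move=> g; exact: badP.
    rewrite sumEFin lee_fin.
    apply: (@le_trans _ _ (\sum_(g <- enum 'I_k) q)).
      by rewrite big_mkcond /=; apply: ler_sum => g _; case: ifP => // _; exact: powR_ge0.
    by rewrite big_enum sumr_const card_ord mulr_natl.
  have finU : P U = (fine (P U))%:E.
    by rewrite fineK // ge0_fin_numE // (le_lt_trans (probability_le1 P mU)) // ltey.
  rewrite probability_setC // finU -EFinB lee_fin lerD2l lerN2 -lee_fin -finU.
  exact: PU.
move=> x Ux g gh.
have nB : ~ Bad g x.
  by move=> Bx; apply: Ux; apply: (@in_bigsetU _ _ _ _ _ g) => //; rewrite mem_enum.
have : (#|[pred i | (i \in T g) && b g i x]| < m g)%N by rewrite ltnNge; apply/negP.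
rewrite ltnS => hc.
apply: le_trans (_ : (Num.Def.trunc (t g))%:R <= t g); last first.
  by have /andP [] := truncn_itv (t0 g).
rewrite ler_nat; apply: leq_trans hc; rewrite leq_eqVlt; apply/orP; left; apply/eqP.
by apply: eq_card => i; rewrite !inE.
Qed.
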